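(* Let $b_1,b_2,b_3$ be functions on an open interval $I$ and let $\gamma: I\to\mathbb{E}^4$ be a regular curve with a Bishop frame $\mathbb{B}$ whose coefficient matrix is $X_{\mathbb{B}}=\begin{pmatrix}0&b_1&b_2&b_3\\-b_1&0&0&0\\-b_2&0&0&0\\-b_3&0&0&0\end{pmatrix}$. Suppose the vector ${}^t(b_1,b_2,b_3)$ is nowhere parallel to ${}^t(0,1,0)$ (equivalently, $(b_1,b_3)$ is nowhere zero). Then $\gamma$ admits a frame $\mathbb{C}$ whose coefficient matrix is $X_{\mathbb{C}}=\begin{pmatrix}0&c_1&c_2&0\\-c_1&0&0&c_3\\-c_2&0&0&0\\0&-c_3&0&0\end{pmatrix}$ with $c_1=\pm\sqrt{b_1^2+b_3^2}$, $c_2=b_2$, $c_3=\pm\dfrac{b_3'b_1-b_3b_1'}{b_1^2+b_3^2}$ (for suitable choices of signs), and the transformation $G=\mathbb{C}\mathbb{B}^{-1}$ is of the form $\begin{pmatrix}1&0&0&0\\0&\pm\cos\theta&0&\pm\sin\theta\\0&0&1&0\\0&-\sin\theta&0&\cos\theta\end{pmatrix}$ for some function $\theta$ with $\theta'=\pm\dfrac{b_3'b_1-b_3b_1'}{b_1^2+b_3^2}$.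
   Context: A regular curve $\gamma: I\to\mathbb{E}^4$ is considered with arc-length parametrization; $\mathbb{T}=\gamma'$ is its unit tangent vector. A frame on $\gamma$ is an ordered orthonormal frame $(\mathbb{T},\mathbb{Z}_1,\mathbb{Z}_2,\mathbb{Z}_3)$ of smooth vector fields along $\gamma$ whose first vector is $\mathbb{T}$; it is identified with the smooth map $\mathbb{Z}: I\to O(4)$ whose rows are these vectors. Its coefficient matrix is the $\mathfrak{o}(4)$-valued function $X$ with $\mathbb{Z}'=X\mathbb{Z}$. A Bishop frame is a frame whose coefficient matrix has the form $\begin{pmatrix}0&b_1&b_2&b_3\\-b_1&0&0&0\\-b_2&0&0&0\\-b_3&0&0&0\end{pmatrix}$. *)

(* Defs.v *)
From HB Require Import structures.
From mathcomp Require Import all_boot all_order all_algebra.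
From mathcomp Require Import all_classical all_reals all_analysis.
Set Implicit Arguments. Unset Strict Implicit. Unset Printing Implicit Defensive.
Import Order.TTheory GRing.Theory Num.Theory.
Import numFieldNormedType.Exports.
Local Open Scope ring_scope.
Local Open Scope classical_set_scope.

Section Defs.
Variable R : realType.

Definition smooth_on (I : set R) (f : R -> R) : Prop :=
  forall (n : nat) (t : R), I t -> derivable (derive1n n f) t 1.

Definition curve_smooth (I : set R) (g : R -> 'rV[R]_4) : Prop :=
  forall j : 'I_4, smooth_on I (fun t => g t ord0 j).

Definition velocity (g : R -> 'rV[R]_4) (t : R) : 'rV[R]_4 :=
  \row_(j < 4) derive1 (fun s => g s ord0 j) t.

Definition arclength_param (I : set R) (g : R -> 'rV[R]_4) : Prop :=
  forall t, I t -> velocity g t *m (velocity g t)^T = 1%:M.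

Definition is_frame (I : set R) (g : R -> 'rV[R]_4) (Z : R -> 'M[R]_4) : Prop :=
  (forall i j : 'I_4, smooth_on I (fun t => Z t i j)) /\
  (forall t, I t -> Z t *m (Z t)^T = 1%:M /\ row ord0 (Z t) = velocity g t).

Definition coeff_mx (I : set R) (Z X : R -> 'M[R]_4) : Prop :=
  forall t, I t -> forall i j : 'I_4,
    derivable (fun s => Z s i j) t 1 /\
    derive1 (fun s => Z s i j) t = (X t *m Z t) i j.

Definition bishop_mx (b1 b2 b3 : R) : 'M[R]_4 :=
  \matrix_(i < 4, j < 4)
    match nat_of_ord i, nat_of_ord j with
    | 0, 1 => b1 | 0, 2 => b2 | 0, 3 => b3
    | 1, 0 => - b1 | 2, 0 => - b2 | 3, 0 => - b3
    | _, _ => 0 end.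

Definition cframe_mx (c1 c2 c3 : R) : 'M[R]_4 :=
  \matrix_(i < 4, j < 4)
    match nat_of_ord i, nat_of_ord j with
    | 0, 1 => c1 | 0, 2 => c2
    | 1, 0 => - c1 | 1, 3 => c3
    | 2, 0 => - c2
    | 3, 1 => - c3
    | _, _ => 0 end.

Definition G_mx (e1 e2 th : R) : 'M[R]_4 :=
  \matrix_(i < 4, j < 4)
    match nat_of_ord i, nat_of_ord j with
    | 0, 0 => 1
    | 1, 1 => e1 * cos th | 1, 3 => e2 * sin th
    | 2, 2 => 1
    | 3, 1 => - sin th | 3, 3 => cos th
    | _, _ => 0 end.

Definition is_sign (e : R) : Prop := e = 1 \/ e = -1.

End Defs.

(* Main.v *)
Require Import Defs.
From HB Require Import structures.
From mathcomp Require Import all_boot all_order all_algebra.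
From mathcomp Require Import all_classical all_reals all_analysis.
From mathcomp Require Import ring lra.
Set Implicit Arguments. Unset Strict Implicit. Unset Printing Implicit Defensive.
Import Order.TTheory GRing.Theory Num.Theory.
Import numFieldNormedType.Exports.
Local Open Scope ring_scope.
Local Open Scope classical_set_scope.

Section Smooth.
Context {R : realType} (I : set R) (oI : open I).

Definition eqI (f g : R -> R) := forall t, I t -> f t = g t.

Lemma nearI t : I t -> \forall s \near t, I s.
Proof. by move=> It; apply: open_nbhs_nbhs. Qed.

Lemma eqI_derive f g : eqI f g -> eqI f^`() g^`().
Proof.
move=> fg t It; rewrite !derive1E; apply: near_eq_derive.
by near=> s; apply: fg; near: s; exact: nearI.
Unshelve. all: by end_near. Qed.

Lemma eqI_derivable f g t : eqI f g -> I t -> derivable f t 1 -> derivable g t 1.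
Proof.
move=> fg It; apply: near_eq_derivable.
by near=> s; apply: fg; near: s; exact: nearI.
Unshelve. all: by end_near. Qed.

Lemma eqI_deriven n f g : eqI f g -> eqI (f^`(n)) (g^`(n)).
Proof.
elim: n => [//|n IH] fg; rewrite !derive1nS; exact/eqI_derive/IH.
Qed.

Definition P n (f : R -> R) := forall t, I t -> derivable (f^`(n)) t 1.
Record Sm n (f : R -> R) : Prop := SmI { Sm_ : forall m, (m <= n)%N -> P m f }.

Lemma P_eqI n f g : eqI f g -> P n f -> P n g.
Proof. by move=> fg Pf t It; apply: (eqI_derivable (eqI_deriven n fg) It); apply: Pf. Qed.

Lemma Sm_eqI n f g : eqI f g -> Sm n f -> Sm n g.
Proof. by move=> fg [Sf]; constructor=> m mn; apply: P_eqI fg (Sf m mn). Qed.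

Lemma PS n f : P n.+1 f <-> P n f^`().
Proof. by rewrite /P derive1Sn. Qed.

Lemma SmS n f : Sm n.+1 f <-> P 0 f /\ Sm n f^`().
Proof.
split.
  move=> [Sf]; split; first exact: (Sf 0%N isT).
  by constructor=> m mn; exact: ((PS m f).1 (Sf m.+1 mn)).
move=> [P0 [Sf]]; constructor; case=> [|m] mn; first exact: P0.
exact: ((PS m f).2 (Sf m mn)).
Qed.

Lemma Sm_le n m f : (m <= n)%N -> Sm n f -> Sm m f.
Proof. by move=> mn [Sf]; constructor=> k km; apply: Sf; exact: leq_trans km mn. Qed.

Lemma Sm_P0 n f : Sm n f -> forall t, I t -> derivable f t 1.
Proof. by move=> [Sf] t It; have := Sf 0%N isT t It. Qed.

Lemma Sm_der n f : Sm n.+1 f -> Sm n f^`().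
Proof. by move/SmS=> []. Qed.

Lemma smoothP f : smooth_on I f <-> forall n, Sm n f.
Proof.
split; first by move=> sf n; constructor=> m _ t It; apply: sf.
by move=> Sf n t It; case: (Sf n) => Sf'; apply: (Sf' n (leqnn n)).
Qed.

Lemma Sm_cst n (k : R) : Sm n (fun _ => k).
Proof.
elim: n k => [|n IH] k.
  by constructor=> m; rewrite leqn0 => /eqP -> t It; exact: derivable_cst.
apply: (proj2 (SmS _ _)); split; first by move=> t It; exact: derivable_cst.
refine (@Sm_eqI _ (fun _ => 0) _ _ (IH 0)) => t It.
by rewrite derive1_cst.
Qed.

Lemma Sm_add n f g : Sm n f -> Sm n g -> Sm n (fun t => f t + g t).
Proof.
elim: n f g => [|n IH] f g Sf Sg.
  constructor=> m; rewrite leqn0 => /eqP -> t It; apply: derivableD; [exact: (Sm_P0 Sf)|exact: (Sm_P0 Sg)].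
apply: (proj2 (SmS _ _)); split.
  by move=> t It; apply: derivableD; [exact: (Sm_P0 Sf)|exact: (Sm_P0 Sg)].
refine (@Sm_eqI _ (fun t => derive1 f t + derive1 g t) _ _ _); last first.
  by apply: IH; exact: Sm_der.
move=> t It; rewrite !derive1E deriveD //; [exact: (Sm_P0 Sf)|exact: (Sm_P0 Sg)].
Qed.

Lemma Sm_mul n f g : Sm n f -> Sm n g -> Sm n (fun t => f t * g t).
Proof.
elim: n f g => [|n IH] f g Sf Sg.
  constructor=> m; rewrite leqn0 => /eqP -> t It; apply: derivableM; [exact: (Sm_P0 Sf)|exact: (Sm_P0 Sg)].
apply: (proj2 (SmS _ _)); split.
  by move=> t It; apply: derivableM; [exact: (Sm_P0 Sf)|exact: (Sm_P0 Sg)].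
refine (@Sm_eqI _ (fun t => f t * derive1 g t + g t * derive1 f t) _ _ _); last first.
  apply: Sm_add; apply: IH; first exact: (Sm_le (leqnSn n)).
  - exact: Sm_der.
  - exact: (Sm_le (leqnSn n)).
  - exact: Sm_der.
move=> t It; rewrite !derive1E deriveM //; [exact: (Sm_P0 Sf)|exact: (Sm_P0 Sg)].
Qed.

Lemma Sm_opp n f : Sm n f -> Sm n (fun t => - f t).
Proof.
move=> Sf; refine (@Sm_eqI _ (fun t => (-1) * f t) _ _ _).
  by move=> t _; rewrite mulN1r.
by apply: Sm_mul => //; exact: Sm_cst.
Qed.

Lemma Sm_sub n f g : Sm n f -> Sm n g -> Sm n (fun t => f t - g t).
Proof. by move=> Sf Sg; apply: Sm_add => //; exact: Sm_opp. Qed.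

Lemma Sm_inv n f : (forall t, I t -> f t != 0) -> Sm n f -> Sm n (fun t => (f t)^-1).
Proof.
move=> f0; elim: n f f0 => [|n IH] f f0 Sf.
  constructor=> m; rewrite leqn0 => /eqP -> t It; apply: derivableV; [exact: f0|exact: (Sm_P0 Sf)].
apply: (proj2 (SmS _ _)); split.
  by move=> t It; apply: derivableV; [exact: f0|exact: (Sm_P0 Sf)].
refine (@Sm_eqI _ (fun t => - ((f t)^-1 * (f t)^-1 * derive1 f t)) _ _ _); last first.
  apply: Sm_opp; apply: Sm_mul; last exact: Sm_der.
  by apply: Sm_mul; apply: IH => //; exact: (Sm_le (leqnSn n)).
move=> t It; rewrite !derive1E deriveV //; [|exact: f0|exact: (Sm_P0 Sf)].
by rewrite -mulNr /= -expr2 exprVn.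
Qed.

Lemma derivable_comp1 (f g : R -> R) x : derivable f x 1 ->
  derivable g (f x) 1 -> derivable (g \o f) x 1.
Proof.
move=> /derivable1_diffP df /derivable1_diffP dg; apply/derivable1_diffP.
exact: differentiable_comp.
Qed.

Lemma derivable_sqrt (x : R) : 0 < x -> derivable Num.sqrt x 1.
Proof. by move=> x0; case: (is_derive1_sqrt x0). Qed.

Lemma Sm_sqrt n f : (forall t, I t -> 0 < f t) -> Sm n f ->
  Sm n (fun t => Num.sqrt (f t)).
Proof.
move=> f0; elim: n f f0 => [|n IH] f f0 Sf.
  constructor=> m; rewrite leqn0 => /eqP -> t It.
  exact: (derivable_comp1 (Sm_P0 Sf It) (derivable_sqrt (f0 t It))).
have Pd : forall t, I t -> derivable (fun t => Num.sqrt (f t)) t 1.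
  move=> t It.
  exact: (derivable_comp1 (Sm_P0 Sf It) (derivable_sqrt (f0 t It))).
apply: (proj2 (SmS _ _)); split; first exact: Pd.
refine (@Sm_eqI _ (fun t => (2 * Num.sqrt (f t))^-1 * derive1 f t) _ _ _); last first.
  apply: Sm_mul; last exact: Sm_der.
  apply: Sm_inv.
    by move=> t It; rewrite mulf_neq0 // gt_eqF // sqrtr_gt0 f0.
  apply: Sm_mul; first exact: (Sm_cst n 2).
  by apply: IH => //; exact: (Sm_le (leqnSn n)).
move=> t It.
have h := derive1_comp (Sm_P0 Sf It) (derivable_sqrt (f0 t It)).
have -> : derive1 (fun t => Num.sqrt (f t)) t = derive1 (Num.sqrt \o f) t by [].
rewrite h; congr (_ * _).
by rewrite derive1E derive_sqrt // f0.
Qed.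

Lemma Sm_sum n k (F : 'I_k -> R -> R) : (forall j, Sm n (F j)) ->
  Sm n (fun t => \sum_(j < k) F j t).
Proof.
elim: k F => [|k IH] F SF.
  refine (@Sm_eqI _ (fun _ => 0) _ _ (Sm_cst n 0)).
  by move=> t _; rewrite big_ord0.
refine (@Sm_eqI _ (fun t => \sum_(j < k) F (widen_ord (leqnSn k) j) t + F ord_max t) _ _ _).
  by move=> t _; rewrite big_ord_recr.
apply: Sm_add; last exact: SF.
exact: (IH (fun j => F (widen_ord (leqnSn k) j))).
Qed.

End Smooth.

Section Helpers.
Context {R : realType}.

Lemma der_add (f g : R -> R) t : derivable f t 1 -> derivable g t 1 ->
  derive1 (fun s => f s + g s) t = derive1 f t + derive1 g t.
Proof. by move=> df dg; rewrite !derive1E; apply: deriveD. Qed.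

Lemma der_mul (f g : R -> R) t : derivable f t 1 -> derivable g t 1 ->
  derive1 (fun s => f s * g s) t = derive1 f t * g t + f t * derive1 g t.
Proof.
move=> df dg; rewrite !derive1E.
have -> : 'D_1 (fun s => f s * g s) t = 'D_1 (f * g) t by [].
by rewrite deriveM // /GRing.scale /= addrC mulrC [f t * _]mulrC.
Qed.

Lemma der_inv (f : R -> R) t : f t != 0 -> derivable f t 1 ->
  derive1 (fun s => (f s)^-1) t = - ((f t)^-1 * (f t)^-1 * derive1 f t).
Proof.
move=> f0 df; rewrite !derive1E deriveV //.
by rewrite -mulNr /= -expr2 exprVn.
Qed.

Lemma der_sqrt (f : R -> R) t : 0 < f t -> derivable f t 1 ->
  derive1 (fun s => Num.sqrt (f s)) t = (2 * Num.sqrt (f t))^-1 * derive1 f t.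
Proof.
move=> f0 df.
have h := derive1_comp df (derivable_sqrt f0).
have -> : derive1 (fun s => Num.sqrt (f s)) t = derive1 (Num.sqrt \o f) t by [].
by rewrite h derive1E derive_sqrt.
Qed.

Lemma derivable_cos1 x : derivable (@cos R) x 1.
Proof. exact: (@derivable_cos R x). Qed.

Lemma der_cos (f : R -> R) t : derivable f t 1 ->
  derive1 (fun s => cos (f s)) t = - sin (f t) * derive1 f t.
Proof.
move=> df; have h := derive1_comp df (@derivable_cos R (f t)).
have -> : derive1 (fun s => cos (f s)) t = derive1 (cos \o f) t by [].
rewrite h derive1E; congr (_ * _).
exact: derive_val.
Qed.

Lemma der_sin (f : R -> R) t : derivable f t 1 ->
  derive1 (fun s => sin (f s)) t = cos (f t) * derive1 f t.
Proof.
move=> df; have h := derive1_comp df (@derivable_sin R (f t)).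
have -> : derive1 (fun s => sin (f s)) t = derive1 (sin \o f) t by [].
rewrite h derive1E; congr (_ * _).
exact: derive_val.
Qed.

Lemma derivable_cosc (f : R -> R) t : derivable f t 1 ->
  derivable (fun s => cos (f s)) t 1.
Proof. by move=> df; apply: (derivable_comp1 df (@derivable_cos R (f t))). Qed.

Lemma derivable_sinc (f : R -> R) t : derivable f t 1 ->
  derivable (fun s => sin (f s)) t 1.
Proof. by move=> df; apply: (derivable_comp1 df (@derivable_sin R (f t))). Qed.

Lemma const_interval (J : set R) (f : R -> R) : is_interval J ->
  (forall x, J x -> derivable f x 1 /\ derive1 f x = 0) ->
  forall x y, J x -> J y -> f x = f y.
Proof.
move=> iJ df.
suff H : forall x y, J x -> J y -> x <= y -> f x = f y.
  move=> x y Jx Jy; case: (leP x y) => xy; first exact: H.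
  by apply/esym/H => //; exact: ltW.
move=> x y Jx Jy xy.
have inJ z : z \in `[x, y]%R -> J z.
  by move=> zI; apply: (iJ x y Jx Jy); rewrite in_itv /= in zI.
have [] := @MVT_segment R f (fun _ => 0) x y xy.
- move=> z zxy; have [dz fz] := df z (inJ z (subset_itv_oo_cc zxy)).
  by apply: DeriveDef => //; rewrite -derive1E.
- apply: derivable_within_continuous => z zxy.
  by have [] := df z (inJ z zxy).
- move=> z _; rewrite mul0r => /eqP; rewrite subr_eq0 => /eqP.
  by move=> ->.
Qed.

End Helpers.

Lemma der_sub {R : realType} (f g : R -> R) t : derivable f t 1 -> derivable g t 1 ->
  derive1 (fun s => f s - g s) t = derive1 f t - derive1 g t.
Proof. by move=> df dg; rewrite !derive1E; apply: deriveB. Qed.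

Section Lift.
Context {R : realType} (I : set R) (oI : open I) (iI : is_interval I).
Context (w : R -> R) (wc : forall t, I t -> {for t, continuous w}).

Lemma ball_in t : I t -> exists2 e : R, 0 < e & forall s, `|t - s| < e -> I s.
Proof.
move=> It; have /nbhs_ballP [e /= e0 He] := nearI oI It.
exists e => // s ts; apply: He; by rewrite -ball_normE /ball_ /=.
Qed.

Lemma below t : I t -> exists2 a, I a & a < t.
Proof.
move=> It; have [e e0 He] := ball_in It; exists (t - e / 2).
  apply: He; rewrite opprB addrC subrK ger0_norm ?divr_ge0 ?ltW //.
  by rewrite ltr_pdivrMr // ltr_pMr // ltr1n.
by rewrite ltrBlDr ltrDl divr_gt0.
Qed.

Lemma above t : I t -> exists2 a, I a & t < a.
Proof.
move=> It; have [e e0 He] := ball_in It; exists (t + e / 2).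
  apply: He; rewrite opprD addrA subrr add0r normrN ger0_norm ?divr_ge0 ?ltW //.
  by rewrite ltr_pdivrMr // ltr_pMr // ltr1n.
by rewrite ltrDl divr_gt0.
Qed.

Definition Fint (a x : R) : R :=
  (\int[@lebesgue_measure R]_(s in [set` `[a, x]]) w s)%R.

Lemma Fint_der a x : I a -> I x -> a < x ->
  derivable (Fint a) x 1 /\ derive1 (Fint a) x = w x.
Proof.
move=> Ia Ix ax; have [u Iu xu] := above Ix.
have sub : forall z, z \in `[a, u]%R -> I z.
  by move=> z zI; apply: (iI Ia Iu); rewrite in_itv /= in zI.
have int : (@lebesgue_measure R).-integrable `[a, u] (EFin \o w).
  apply: continuous_compact_integrable; first exact: segment_compact.
  apply/continuous_in_subspaceT => z /[1!inE] zI.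
  exact: wc (sub z zI).
exact: (@continuous_FTC1_closed R w a x u xu int ax (wc Ix)).
Qed.


Lemma Fint_indep a a' t c : I a -> I a' -> I t -> I c -> a < t -> a < c ->
  a' < t -> a' < c -> Fint a t - Fint a c = Fint a' t - Fint a' c.
Proof.
move=> Ia Ia' It Ic at0 ac a't a'c.
pose J := fun s => I s /\ a < s /\ a' < s.
have iJ : is_interval J.
  move=> x y [Ix [ax a'x]] [Iy _] z /andP[xz zy]; split; first by apply: (iI Ix Iy); rewrite xz zy.
  by split; apply: (lt_le_trans _ xz).
have hd : forall x, J x -> derivable (fun s => Fint a s - Fint a' s) x 1 /\
    derive1 (fun s => Fint a s - Fint a' s) x = 0.
  move=> x [Ix [ax a'x]].
  have [d1 e1] := Fint_der Ia Ix ax; have [d2 e2] := Fint_der Ia' Ix a'x.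
  split; first exact: derivableB.
  by rewrite (der_sub d1 d2) e1 e2 subrr.
have h := @const_interval R J _ iJ hd t c (conj It (conj at0 a't)) (conj Ic (conj ac a'c)).
by move: h => /= h; lra.
Qed.

Variables (c th0 : R).
Hypothesis Ic : I c.

Definition mpt (t : R) := xget c [set a | I a /\ a < t /\ a < c].
Definition theta (t : R) := th0 + (Fint (mpt t) t - Fint (mpt t) c).

Lemma theta_c : theta c = th0.
Proof. by rewrite /theta subrr addr0. Qed.

Lemma theta_loc t0 : I t0 -> exists a, [/\ I a, a < t0, a < c &
  \forall s \near t0, theta s = th0 + (Fint a s - Fint a c)].
Proof.
move=> It0.
have Imin : I (Order.min t0 c) by rewrite /Order.min; case: ifP.
have [a Ia amin] := below Imin.
have at0 : a < t0 by apply: (lt_le_trans amin); rewrite ge_min lexx.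
have ac : a < c by apply: (lt_le_trans amin); rewrite ge_min lexx orbT.
exists a; split => //.
near=> s.
have Is : I s by near: s; exact: nearI.
have as_ : a < s by near: s; exact: lt_nbhsr.
have [Im [ms mc]] : I (mpt s) /\ mpt s < s /\ mpt s < c.
  by apply: (@xgetPex _ c [set a | I a /\ a < s /\ a < c]); exists a.
by rewrite /theta (@Fint_indep (mpt s) a s c).
Unshelve. all: by end_near. Qed.

Lemma theta_der t : I t -> derivable theta t 1 /\ derive1 theta t = w t.
Proof.
move=> It; have [a [Ia at0 ac nt]] := theta_loc It.
have [d e] := Fint_der Ia It at0.
pose G := fun s => th0 + (Fint a s - Fint a c).
have dc : forall k : R, derivable (fun _ : R => k) t 1 by move=> k; exact: derivable_cst.
have dF : derivable (fun s => Fint a s - Fint a c) t 1 := derivableB d (dc (Fint a c)).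
have dG : derivable G t 1 := derivableD (dc th0) dF.
have nt' : \forall s \near t, G s = theta s by near=> s; rewrite (near nt s).
split; first exact: (near_eq_derivable nt' dG).
rewrite derive1E -(near_eq_derive _ nt') -derive1E /G.
rewrite (der_add (dc th0) dF) (der_sub d (dc _)) e !derive1_cst.
by rewrite add0r subr0.
Unshelve. all: by end_near. Qed.

End Lift.


Section Mx.
Context {R : realType}.

Definition o0 : 'I_4 := ord0.
Definition o1 : 'I_4 := @Ordinal 4 1 isT.
Definition o2 : 'I_4 := @Ordinal 4 2 isT.
Definition o3 : 'I_4 := @Ordinal 4 3 isT.

Lemma sum4 (F : 'I_4 -> R) : \sum_(k < 4) F k = F o0 + F o1 + F o2 + F o3.
Proof.
rewrite !big_ord_recr big_ord0 /= add0r.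
by congr (F _ + F _ + F _ + F _); apply: val_inj.
Qed.

Lemma ord4P (P : 'I_4 -> Prop) : P o0 -> P o1 -> P o2 -> P o3 -> forall i, P i.
Proof.
move=> p0 p1 p2 p3 [[|[|[|[|//]]]] Hi].
- by have -> : Ordinal Hi = o0 by apply: val_inj.
- by have -> : Ordinal Hi = o1 by apply: val_inj.
- by have -> : Ordinal Hi = o2 by apply: val_inj.
- by have -> : Ordinal Hi = o3 by apply: val_inj.
Qed.

Definition Gm (a s : R) : 'M[R]_4 :=
  \matrix_(i < 4, j < 4)
    match nat_of_ord i, nat_of_ord j with
    | 0, 0 => 1
    | 1, 1 => a | 1, 3 => s
    | 2, 2 => 1
    | 3, 1 => - s | 3, 3 => a
    | _, _ => 0 end.

Lemma bishop0 a b c (M : 'M[R]_4) j :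
  (bishop_mx a b c *m M) o0 j = a * M o1 j + b * M o2 j + c * M o3 j.
Proof. by rewrite mxE sum4 !mxE /=; ring. Qed.
Lemma bishop1 a b c (M : 'M[R]_4) j : (bishop_mx a b c *m M) o1 j = - a * M o0 j.
Proof. by rewrite mxE sum4 !mxE /=; ring. Qed.
Lemma bishop2 a b c (M : 'M[R]_4) j : (bishop_mx a b c *m M) o2 j = - b * M o0 j.
Proof. by rewrite mxE sum4 !mxE /=; ring. Qed.
Lemma bishop3 a b c (M : 'M[R]_4) j : (bishop_mx a b c *m M) o3 j = - c * M o0 j.
Proof. by rewrite mxE sum4 !mxE /=; ring. Qed.

Lemma cframe0 a b c (M : 'M[R]_4) j :
  (cframe_mx a b c *m M) o0 j = a * M o1 j + b * M o2 j.
Proof. by rewrite mxE sum4 !mxE /=; ring. Qed.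
Lemma cframe1 a b c (M : 'M[R]_4) j :
  (cframe_mx a b c *m M) o1 j = - a * M o0 j + c * M o3 j.
Proof. by rewrite mxE sum4 !mxE /=; ring. Qed.
Lemma cframe2 a b c (M : 'M[R]_4) j : (cframe_mx a b c *m M) o2 j = - b * M o0 j.
Proof. by rewrite mxE sum4 !mxE /=; ring. Qed.
Lemma cframe3 a b c (M : 'M[R]_4) j : (cframe_mx a b c *m M) o3 j = - c * M o1 j.
Proof. by rewrite mxE sum4 !mxE /=; ring. Qed.

Lemma Gm0 a s (M : 'M[R]_4) j : (Gm a s *m M) o0 j = M o0 j.
Proof. by rewrite mxE sum4 !mxE /=; ring. Qed.
Lemma Gm1 a s (M : 'M[R]_4) j : (Gm a s *m M) o1 j = a * M o1 j + s * M o3 j.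
Proof. by rewrite mxE sum4 !mxE /=; ring. Qed.
Lemma Gm2 a s (M : 'M[R]_4) j : (Gm a s *m M) o2 j = M o2 j.
Proof. by rewrite mxE sum4 !mxE /=; ring. Qed.
Lemma Gm3 a s (M : 'M[R]_4) j : (Gm a s *m M) o3 j = - s * M o1 j + a * M o3 j.
Proof. by rewrite mxE sum4 !mxE /=; ring. Qed.

Lemma Gm_orth a s : a ^+ 2 + s ^+ 2 = 1 -> Gm a s *m (Gm a s)^T = 1%:M.
Proof.
move=> h; apply/matrixP; apply: ord4P; apply: ord4P;
  rewrite mxE sum4 !mxE -val_eqE /=; first [ring | rewrite -h; ring].
Qed.

Lemma G_mx_Gm th : G_mx 1 1 th = Gm (cos th) (sin th).
Proof. by apply/matrixP; apply: ord4P; apply: ord4P; rewrite !mxE /= ?mul1r. Qed.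

End Mx.

Lemma der_opp {R : realType} (f : R -> R) t : derivable f t 1 ->
  derive1 (fun s => - f s) t = - derive1 f t.
Proof. by move=> df; rewrite !derive1E; apply: deriveN. Qed.

Section Main.
Context {R : realType} (I : set R) (oI : open I) (iI : is_interval I).
Context (b1 b2 b3 : R -> R) (B : R -> 'M[R]_4).
Hypothesis Bsm : forall i j, smooth_on I (fun t => B t i j).
Hypothesis Borth : forall t, I t -> B t *m (B t)^T = 1%:M.
Hypothesis Bdv : forall t, I t -> forall i j, derivable (fun s => B s i j) t 1.
Hypothesis Bder : forall t, I t -> forall i j,
  derive1 (fun s => B s i j) t = (bishop_mx (b1 t) (b2 t) (b3 t) *m B t) i j.
Hypothesis nz : forall t, I t -> b1 t != 0 \/ b3 t != 0.

Lemma BSm n i j : Sm I n (fun t => B t i j).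
Proof. by case: (smoothP I (fun t => B t i j)) => H _; apply: H. Qed.

Lemma b_sum t : I t -> forall k, bishop_mx (b1 t) (b2 t) (b3 t) o0 k =
  \sum_(j < 4) derive1 (fun s => B s o0 j) t * B t k j.
Proof.
move=> It k.
have <- : (bishop_mx (b1 t) (b2 t) (b3 t) *m B t *m (B t)^T) o0 k =
    bishop_mx (b1 t) (b2 t) (b3 t) o0 k by rewrite -mulmxA Borth // mulmx1.
rewrite mxE; apply: eq_bigr => j _; by rewrite Bder // !mxE.
Qed.

Lemma bSm n k : Sm I n (fun t => bishop_mx (b1 t) (b2 t) (b3 t) o0 k).
Proof.
refine (Sm_eqI oI (f := fun t => \sum_(j < 4) derive1 (fun s => B s o0 j) t * B t k j) _ _).
  by move=> t It; rewrite b_sum.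
apply: (Sm_sum oI) => j; apply: (Sm_mul oI); [exact/Sm_der/BSm|exact: BSm].
Qed.

Lemma b1Sm n : Sm I n b1.
Proof. by refine (Sm_eqI oI _ (bSm n o1)) => t _; rewrite mxE. Qed.
Lemma b2Sm n : Sm I n b2.
Proof. by refine (Sm_eqI oI _ (bSm n o2)) => t _; rewrite mxE. Qed.
Lemma b3Sm n : Sm I n b3.
Proof. by refine (Sm_eqI oI _ (bSm n o3)) => t _; rewrite mxE. Qed.

Definition q t := b1 t ^+ 2 + b3 t ^+ 2.
Definition r t := Num.sqrt (q t).
Definition u t := b1 t / r t.
Definition v t := b3 t / r t.
Definition w t := (derive1 b3 t * b1 t - b3 t * derive1 b1 t) / (b1 t ^+ 2 + b3 t ^+ 2).

Lemma q_gt0 t : I t -> 0 < q t.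
Proof.
move=> It; rewrite /q; case: (nz It) => h.
  have h1 : 0 < b1 t ^+ 2 by rewrite lt_neqAle sqr_ge0 andbT eq_sym sqrf_eq0.
  by apply: (lt_le_trans h1); rewrite lerDl sqr_ge0.
have h1 : 0 < b3 t ^+ 2 by rewrite lt_neqAle sqr_ge0 andbT eq_sym sqrf_eq0.
by apply: (lt_le_trans h1); rewrite lerDr sqr_ge0.
Qed.

Lemma q_neq0 t : I t -> q t != 0.
Proof. by move=> It; rewrite gt_eqF // q_gt0. Qed.

Lemma r_gt0 t : I t -> 0 < r t.
Proof. by move=> It; rewrite /r sqrtr_gt0 q_gt0. Qed.

Lemma r_neq0 t : I t -> r t != 0.
Proof. by move=> It; rewrite gt_eqF // r_gt0. Qed.

Lemma r2 t : I t -> r t ^+ 2 = b1 t ^+ 2 + b3 t ^+ 2.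
Proof. by move=> It; rewrite /r sqr_sqrtr // ltW // q_gt0. Qed.

Lemma qSm n : Sm I n q.
Proof.
refine (Sm_eqI oI (f := fun t => b1 t * b1 t + b3 t * b3 t) _ _).
  by move=> t _; rewrite /q !expr2.
by apply: (Sm_add oI); apply: (Sm_mul oI); first [exact: b1Sm|exact: b3Sm].
Qed.

Lemma rSm n : Sm I n r.
Proof. exact: (Sm_sqrt oI q_gt0 (qSm n)). Qed.

Lemma uSm n : Sm I n u.
Proof. exact: (Sm_mul oI (b1Sm n) (Sm_inv oI r_neq0 (rSm n))). Qed.

Lemma vSm n : Sm I n v.
Proof. exact: (Sm_mul oI (b3Sm n) (Sm_inv oI r_neq0 (rSm n))). Qed.

Lemma wSm n : Sm I n w.
Proof.
apply: (Sm_mul oI); last exact: (Sm_inv oI q_neq0 (qSm n)).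
apply: (Sm_sub oI); apply: (Sm_mul oI);
  first [exact: b1Sm|exact: b3Sm|exact/Sm_der/b1Sm|exact/Sm_der/b3Sm].
Qed.

Lemma db1 t : I t -> derivable b1 t 1.
Proof. exact: (Sm_P0 (b1Sm 0)). Qed.
Lemma db3 t : I t -> derivable b3 t 1.
Proof. exact: (Sm_P0 (b3Sm 0)). Qed.

Lemma dq t : I t -> derivable q t 1 /\
  derive1 q t = 2 * b1 t * derive1 b1 t + 2 * b3 t * derive1 b3 t.
Proof.
move=> It; have d1 := db1 It; have d3 := db3 It.
have -> : q = fun s => b1 s * b1 s + b3 s * b3 s.
  by apply/funext => s; rewrite /q !expr2.
split; first by apply: derivableD; apply: derivableM.
rewrite der_add; [|exact: derivableM|exact: derivableM].
by rewrite !der_mul //; ring.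
Qed.

Lemma dr t : I t -> derivable r t 1 /\
  derive1 r t = (2 * r t)^-1 * derive1 q t.
Proof.
move=> It; have [d e] := dq It.
split; first exact: (derivable_comp1 d (derivable_sqrt (q_gt0 It))).
by rewrite /r der_sqrt // q_gt0.
Qed.

Lemma alg_u (B1 B3 D1 D3 rr : R) : rr != 0 -> rr ^+ 2 = B1 ^+ 2 + B3 ^+ 2 ->
  D1 * rr^-1 + B1 * - (rr^-1 * rr^-1 * ((2 * rr)^-1 * (2 * B1 * D1 + 2 * B3 * D3)))
  = - ((D3 * B1 - B3 * D1) / (B1 ^+ 2 + B3 ^+ 2)) * (B3 / rr).
Proof.
move=> r0 hr; rewrite -hr; apply/eqP; rewrite -subr_eq0; apply/eqP.
transitivity (D1 * (rr ^+ 2 - B1 ^+ 2 - B3 ^+ 2) / rr ^+ 3).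
  by field; rewrite ?r0 ?mulf_neq0 ?expf_neq0 ?pnatr_eq0.
by rewrite hr addrAC addrK subrr mulr0 mul0r.
Qed.

Lemma alg_v (B1 B3 D1 D3 rr : R) : rr != 0 -> rr ^+ 2 = B1 ^+ 2 + B3 ^+ 2 ->
  D3 * rr^-1 + B3 * - (rr^-1 * rr^-1 * ((2 * rr)^-1 * (2 * B1 * D1 + 2 * B3 * D3)))
  = ((D3 * B1 - B3 * D1) / (B1 ^+ 2 + B3 ^+ 2)) * (B1 / rr).
Proof.
move=> r0 hr; rewrite -hr; apply/eqP; rewrite -subr_eq0; apply/eqP.
transitivity (D3 * (rr ^+ 2 - B1 ^+ 2 - B3 ^+ 2) / rr ^+ 3).
  by field; rewrite ?r0 ?mulf_neq0 ?expf_neq0 ?pnatr_eq0.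
by rewrite hr addrAC addrK subrr mulr0 mul0r.
Qed.

Lemma du t : I t -> derivable u t 1 /\ derive1 u t = - w t * v t.
Proof.
move=> It; have [dr1 er] := dr It; have [_ eq] := dq It.
have dri : derivable (fun s => (r s)^-1) t 1 by apply: derivableV => //; exact: r_neq0.
split; first exact: (derivableM (db1 It) dri).
rewrite /u (der_mul (db1 It) dri) (der_inv (r_neq0 It) dr1) er eq.
exact: (alg_u _ _ (r_neq0 It) (r2 It)).
Qed.

Lemma dv t : I t -> derivable v t 1 /\ derive1 v t = w t * u t.
Proof.
move=> It; have [dr1 er] := dr It; have [_ eq] := dq It.
have dri : derivable (fun s => (r s)^-1) t 1 by apply: derivableV => //; exact: r_neq0.
split; first exact: (derivableM (db3 It) dri).
rewrite /v (der_mul (db3 It) dri) (der_inv (r_neq0 It) dr1) er eq.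
exact: (alg_v _ _ (r_neq0 It) (r2 It)).
Qed.

Lemma uv1 t : I t -> u t ^+ 2 + v t ^+ 2 = 1.
Proof.
move=> It; rewrite /u /v !expr_div_n -mulrDl r2 // divff //.
by rewrite -/(q t) q_neq0.
Qed.

Lemma ru t : I t -> r t * u t = b1 t.
Proof. by move=> It; rewrite /u mulrC divfK // r_neq0. Qed.
Lemma rv t : I t -> r t * v t = b3 t.
Proof. by move=> It; rewrite /v mulrC divfK // r_neq0. Qed.

Lemma wc t : I t -> {for t, continuous w}.
Proof.
move=> It; apply: differentiable_continuous; apply/derivable1_diffP.
exact: (Sm_P0 (wSm 0)).
Qed.


Context (g : R -> 'rV[R]_4).
Hypothesis Brow : forall t, I t -> row ord0 (B t) = velocity g t.
Variable c : R.
Hypothesis Ic : I c.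

Definition th0 := if 0 <= v c then acos (u c) else - acos (u c).
Definition th := theta I w c th0.

Lemma cs0 : cos th0 = u c /\ sin th0 = v c.
Proof.
have h := uv1 Ic.
have hu2 : u c ^+ 2 <= 1 by rewrite -h lerDl sqr_ge0.
have hu : -1 <= u c <= 1 by apply/andP; split; nra.
have hu' : u c \in `[-1, 1]%R by rewrite in_itv /=.
have cs : cos (acos (u c)) = u c := acosK hu'.
have sn : sin (acos (u c)) = `|v c|.
  rewrite sin_acos //.
  have -> : 1 - u c ^+ 2 = v c ^+ 2 by rewrite -h addrAC subrr add0r.
  exact: sqrtr_sqr.
rewrite /th0; case: ifP => hv.
  by rewrite cs sn ger0_norm.
by rewrite cosN sinN cs sn ltr0_norm ?opprK // ltNge hv.
Qed.

Lemma dth t : I t -> derivable th t 1 /\ derive1 th t = w t.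
Proof. by move=> It; apply: (theta_der oI iI wc th0 Ic It). Qed.

Lemma hh_const t : I t -> u t * cos (th t) + v t * sin (th t) = 1.
Proof.
move=> It.
have hd : forall x, I x -> derivable (fun s => u s * cos (th s) + v s * sin (th s)) x 1 /\
    derive1 (fun s => u s * cos (th s) + v s * sin (th s)) x = 0.
  move=> x Ix; have [dt et] := dth Ix; have [du1 eu] := du Ix; have [dv1 ev] := dv Ix.
  have dC := derivable_cosc dt; have dS := derivable_sinc dt.
  split; first exact: (derivableD (derivableM du1 dC) (derivableM dv1 dS)).
  rewrite der_add; [|exact: derivableM du1 dC|exact: derivableM dv1 dS].
  rewrite der_mul; [|exact: du1|exact: dC].
  rewrite der_mul; [|exact: dv1|exact: dS].
  rewrite (der_cos dt) (der_sin dt) eu ev et; ring.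
have := @const_interval R I _ iI hd t c It Ic => /= ->.
rewrite /th theta_c; have [-> ->] := cs0.
by rewrite -!expr2 uv1.
Qed.

Lemma cos_th t : I t -> cos (th t) = u t /\ sin (th t) = v t.
Proof.
move=> It; have h1 := hh_const It; have h2 := uv1 It; have h3 := cos2Dsin2 (th t).
have E : (u t - cos (th t)) ^+ 2 + (v t - sin (th t)) ^+ 2 = 0.
  transitivity ((u t ^+ 2 + v t ^+ 2) + (cos (th t) ^+ 2 + sin (th t) ^+ 2)
     - 2 * (u t * cos (th t) + v t * sin (th t))); first ring.
  by rewrite h1 h2 h3; ring.
move/eqP: E; rewrite paddr_eq0 ?sqr_ge0 // !sqrf_eq0 !subr_eq0.
by move=> /andP[/eqP a /eqP b]; split.
Qed.

Definition Ct t := Gm (u t) (v t) *m B t.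

Lemma CSm i j : smooth_on I (fun t => Ct t i j).
Proof.
apply: (proj2 (smoothP I _)) => n; move: i j.
apply: (@ord4P (fun i => forall j, Sm I n (fun t => Ct t i j))) => j.
- refine (Sm_eqI oI (f := fun t => B t o0 j) _ (BSm n o0 j)).
  by move=> t _; rewrite /Ct Gm0.
- refine (Sm_eqI oI (f := fun t => u t * B t o1 j + v t * B t o3 j) _ _).
    by move=> t _; rewrite /Ct Gm1.
  by apply: (Sm_add oI); apply: (Sm_mul oI); first [exact: uSm|exact: vSm|exact: BSm].
- refine (Sm_eqI oI (f := fun t => B t o2 j) _ (BSm n o2 j)).
  by move=> t _; rewrite /Ct Gm2.
- refine (Sm_eqI oI (f := fun t => - v t * B t o1 j + u t * B t o3 j) _ _).
    by move=> t _; rewrite /Ct Gm3.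
  apply: (Sm_add oI); apply: (Sm_mul oI); try exact: BSm; first exact: (Sm_opp oI (vSm n)).
  exact: uSm.
Qed.

Lemma Corth t : I t -> Ct t *m (Ct t)^T = 1%:M.
Proof.
move=> It; rewrite /Ct trmx_mul mulmxA -(mulmxA (Gm _ _)) Borth // mulmx1.
by apply: Gm_orth; exact: uv1.
Qed.

Lemma Crow t : I t -> row ord0 (Ct t) = velocity g t.
Proof.
move=> It; rewrite -Brow //; apply/rowP => j; rewrite !mxE.
by have := Gm0 (u t) (v t) (B t) j; rewrite mxE => ->.
Qed.

Lemma Ccoeff : coeff_mx I Ct (fun t => cframe_mx (r t) (b2 t) (w t)).
Proof.
move=> t It.
apply: (@ord4P (fun i => forall j, derivable (fun s => Ct s i j) t 1 /\
   derive1 (fun s => Ct s i j) t = (cframe_mx (r t) (b2 t) (w t) *m Ct t) i j)) => j.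
- have -> : (fun s => Ct s o0 j) = (fun s => B s o0 j).
    by apply/funext => s; rewrite /Ct Gm0.
  split; first exact: Bdv.
  rewrite Bder // bishop0 cframe0 /Ct Gm1 Gm2 -(ru It) -(rv It); ring.
- have -> : (fun s => Ct s o1 j) = (fun s => u s * B s o1 j + v s * B s o3 j).
    by apply/funext => s; rewrite /Ct Gm1.
  have [du1 eu] := du It; have [dv1 ev] := dv It.
  have dB1 := Bdv (i := o1) (j := j) It; have dB3 := Bdv (i := o3) (j := j) It.
  split; first exact: (derivableD (derivableM du1 dB1) (derivableM dv1 dB3)).
  rewrite der_add; [|exact: derivableM du1 dB1|exact: derivableM dv1 dB3].
  rewrite der_mul; [|exact: du1|exact: dB1].
  rewrite der_mul; [|exact: dv1|exact: dB3].
  rewrite eu ev !Bder // bishop1 bishop3 cframe1 /Ct Gm0 Gm3 -(ru It) -(rv It).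
  apply/eqP; rewrite -subr_eq0; apply/eqP.
  transitivity (- r t * B t o0 j * (u t ^+ 2 + v t ^+ 2 - 1)); first ring.
  by rewrite uv1 // subrr mulr0.
- have -> : (fun s => Ct s o2 j) = (fun s => B s o2 j).
    by apply/funext => s; rewrite /Ct Gm2.
  split; first exact: Bdv.
  by rewrite Bder // bishop2 cframe2 /Ct Gm0.
- have -> : (fun s => Ct s o3 j) = (fun s => - v s * B s o1 j + u s * B s o3 j).
    by apply/funext => s; rewrite /Ct Gm3.
  have [du1 eu] := du It; have [dv1 ev] := dv It.
  have dnv : derivable (fun s => - v s) t 1 by apply: derivableN.
  have dB1 := Bdv (i := o1) (j := j) It; have dB3 := Bdv (i := o3) (j := j) It.
  split; first exact: (derivableD (derivableM dnv dB1) (derivableM du1 dB3)).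
  rewrite der_add; [|exact: derivableM dnv dB1|exact: derivableM du1 dB3].
  rewrite (der_mul (f := fun s => - v s) (g := fun s => B s o1 j) dnv dB1).
  rewrite (der_mul (f := u) (g := fun s => B s o3 j) du1 dB3).
  rewrite (der_opp dv1) eu ev !Bder // bishop1 bishop3 cframe3 /Ct Gm1 -(ru It) -(rv It).
  ring.
Qed.

Lemma CinvB t : I t -> Ct t *m invmx (B t) = G_mx 1 1 (th t).
Proof.
move=> It; have [Bu _] := mulmx1_unit (Borth It).
rewrite /Ct mulmxK // G_mx_Gm.
by have [-> ->] := cos_th It.
Qed.

End Main.

Unset Implicit Arguments.
Set Strict Implicit.
Set Printing Implicit Defensive.

Theorem lemma2 (R : realType) (I : set R) (b1 b2 b3 : R -> R)
    (g : R -> 'rV[R]_4) (B : R -> 'M[R]_4) :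
  open I -> is_interval I -> I !=set0 ->
  curve_smooth I g -> arclength_param I g ->
  is_frame I g B ->
  coeff_mx I B (fun t => bishop_mx (b1 t) (b2 t) (b3 t)) ->
  (forall t, I t -> b1 t != 0 \/ b3 t != 0) ->
  exists (C : R -> 'M[R]_4) (c1 c2 c3 th : R -> R) (s1 s3 sth e1 e2 : R),
    [/\ is_sign s1, is_sign s3, is_sign sth, is_sign e1 & is_sign e2] /\
    is_frame I g C /\
    coeff_mx I C (fun t => cframe_mx (c1 t) (c2 t) (c3 t)) /\
    (forall t, I t ->
      [/\ c1 t = s1 * Num.sqrt (b1 t ^+ 2 + b3 t ^+ 2),
          c2 t = b2 t,
          c3 t = s3 * ((derive1 b3 t * b1 t - b3 t * derive1 b1 t)
                        / (b1 t ^+ 2 + b3 t ^+ 2)) &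
          C t *m invmx (B t) = G_mx e1 e2 (th t)] /\
      derivable th t 1 /\
      derive1 th t = sth * ((derive1 b3 t * b1 t - b3 t * derive1 b1 t)
                        / (b1 t ^+ 2 + b3 t ^+ 2))).
Proof.
move=> oI iI [c Ic] _ _ [Bsm Bfr] coB nz.
have Borth : forall t, I t -> B t *m (B t)^T = 1%:M by move=> t It; case: (Bfr t It).
have Brow : forall t, I t -> row ord0 (B t) = velocity g t by move=> t It; case: (Bfr t It).
have Bdv : forall t, I t -> forall i j, derivable (fun s => B s i j) t 1.
  by move=> t It i j; case: (coB t It i j).
have Bder : forall t, I t -> forall i j,
    derive1 (fun s => B s i j) t = (bishop_mx (b1 t) (b2 t) (b3 t) *m B t) i j.
  by move=> t It i j; case: (coB t It i j).
have s1 : is_sign (1 : R) by left.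
exists (Ct b1 b3 B), (r b1 b3), b2, (w b1 b3), (th I b1 b3 c), 1, 1, 1, 1, 1.
split; first by [].
split.
  split; first exact: (CSm oI Bsm Borth Bder nz).
  move=> t It; split; first exact: (Corth Borth nz It).
  exact: (Crow b1 b3 Brow It).
split; first exact: (Ccoeff oI Bsm Borth Bdv Bder nz).
move=> t It; split.
  split; rewrite ?mul1r //.
  exact: (CinvB oI iI Bsm Borth Bder nz Ic It).
have [d e] := dth oI iI Bsm Borth Bder nz Ic It.
by rewrite mul1r.
Qed.
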